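(* For each $j\in\mathbb{Z}_{\geq0}$ let $(t_{j,n})_{n\ge1}$ be a sequence of nonnegative reals, and define $(s_{j,n})_{n\ge1}$ recursively by $s_{j,1}=t_{j,1}$ and $s_{j,n}=\sum_{i=0}^{j}s_{i,n-1}t_{j-i,n}$ for $n\ge2$. Suppose that for every $j\in\mathbb{Z}_{\ge0}$, \[ t_{j,n}=\frac{1}{j!\,n^j}\left(1-\frac1n\right)+O\!\left(\frac{1}{n^{j+2}}\right)\quad(n\to\infty). \] Then for every $j\in\mathbb{Z}_{\ge0}$, $s_{j,n}=O\!\left(n^{-1/(j+1)}\right)$ as $n\to\infty$.
   Context: Implied constants in $O(\cdot)$ may depend on $j$. *)

(* Defs.v *)
From Stdlib Require Import Reals Arith Lra Lia.
Open Scope R_scope.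

(* s_{j,n}: defined for n >= 1; index n = 0 is a dummy value 0.
   s j 1 = t j 1 ; s j (n+1) = sum_{i=0}^{j} s i n * t (j-i) (n+1)  for n >= 1. *)
Fixpoint sseq (t : nat -> nat -> R) (n : nat) (j : nat) : R :=
  match n with
  | O => 0
  | S O => t j 1%nat
  | S m => sum_f_R0 (fun i => sseq t m i * t (j - i)%nat n) j
  end.

Definition bigO (f g : nat -> R) : Prop :=
  exists C : R, exists N : nat, forall n : nat, (N <= n)%nat -> Rabs (f n) <= C * g n.

(* Main.v *)
Require Import Defs.
From Stdlib Require Import Reals Arith Lra Lia Psatz.
Open Scope R_scope.

Lemma nat_above (x : R) : exists N : nat, x <= INR N.
Proof.
  destruct (archimed_cor1 (/ (Rabs x + 1))) as [N [HN HN0]].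
  { apply Rinv_0_lt_compat. pose proof (Rabs_pos x). lra. }
  exists N. assert (0 < INR N) by (apply lt_0_INR; lia).
  assert (Habs: 0 < Rabs x + 1) by (pose proof (Rabs_pos x); lra).
  destruct (Rle_lt_dec (INR N) (Rabs x + 1)) as [Hle|Hlt].
  - pose proof (Rinv_le_contravar _ _ H Hle). lra.
  - pose proof (Rle_abs x). lra.
Qed.

Lemma sum_nonneg (f : nat -> R) (m : nat) :
  (forall i, (i <= m)%nat -> 0 <= f i) -> 0 <= sum_f_R0 f m.
Proof.
  induction m; intros H; simpl.
  - apply H; lia.
  - pose proof (H (S m) (le_n _)). assert (0 <= sum_f_R0 f m) by (apply IHm; intros; apply H; lia). lra.
Qed.

Lemma s_nonneg (t : nat -> nat -> R)
  (t_nonneg : forall j n : nat, (1 <= n)%nat -> 0 <= t j n) :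
  forall n j, (1 <= n)%nat -> 0 <= sseq t n j.
Proof.
  induction n as [|n IH]; intros j Hn; [lia|].
  destruct n as [|m].
  - simpl. apply t_nonneg; lia.
  - change (sseq t (S (S m)) j) with
      (sum_f_R0 (fun i => sseq t (S m) i * t (j - i)%nat (S (S m))) j).
    apply sum_nonneg. intros i _. apply Rmult_le_pos; [apply IH; lia| apply t_nonneg; lia].
Qed.

Lemma s_decomp (t : nat -> nat -> R) (n j : nat) : (2 <= n)%nat -> (1 <= j)%nat ->
  sseq t n j = sum_f_R0 (fun i => sseq t (n-1) i * t (j - i)%nat n) (j-1)
               + sseq t (n-1) j * t 0%nat n.
Proof.
  intros Hn Hj. destruct n as [|[|m]]; try lia. destruct j as [|j']; try lia.
  change (sseq t (S (S m)) (S j')) with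
      (sum_f_R0 (fun i => sseq t (S m) i * t (S j' - i)%nat (S (S m))) (S j')).
  replace (S (S m) - 1)%nat with (S m) by lia.
  replace (S j' - 1)%nat with j' by lia.
  rewrite tech5. cbv beta. rewrite Nat.sub_diag. reflexivity.
Qed.

Lemma s_decomp0 (t : nat -> nat -> R) (n : nat) : (2 <= n)%nat ->
  sseq t n 0 = sseq t (n-1) 0 * t 0%nat n.
Proof.
  intros Hn. destruct n as [|[|m]]; try lia.
  replace (S (S m) - 1)%nat with (S m) by lia. reflexivity.
Qed.
Section S.
Variable t : nat -> nat -> R.
Hypothesis t_asym : forall j : nat,
     bigO (fun n => t j n - / (INR (fact j) * INR n ^ j) * (1 - / INR n))
          (fun n => / INR n ^ (j + 2)).

Lemma t0_upper : exists c N, 0 <= c /\ (1 <= N)%nat /\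
  forall n, (N <= n)%nat -> t 0%nat n <= 1 - / INR n + c / INR n ^ 2.
Proof.
  destruct (t_asym 0%nat) as [C [N0 H]].
  exists (Rabs C), (Nat.max N0 1). split; [apply Rabs_pos|]. split; [lia|].
  intros n Hn. specialize (H n ltac:(lia)). simpl in H.
  assert (Hpos: 0 < INR n) by (apply lt_0_INR; lia).
  assert (Hp2 : 0 < / (INR n * (INR n * 1))) by (apply Rinv_0_lt_compat; nra).
  replace (INR n ^ 2) with (INR n * (INR n * 1)) by (simpl; ring).
  pose proof (Rle_abs (t 0%nat n - / (1 * 1) * (1 - / INR n))).
  pose proof (Rle_abs C).
  assert (C * / (INR n * (INR n * 1)) <= Rabs C * / (INR n * (INR n * 1)))
    by (apply Rmult_le_compat_r; lra).
  unfold Rdiv. replace (/ (1*1)) with 1 in * by field. lra.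
Qed.

Lemma tk_upper k : (1 <= k)%nat -> exists D N, 0 <= D /\ (1 <= N)%nat /\
  forall n, (N <= n)%nat -> t k n <= D / INR n.
Proof.
  intros Hk. destruct (t_asym k) as [C [N0 H]].
  exists (1 + Rabs C), (Nat.max N0 1). split; [pose proof (Rabs_pos C); lra|]. split; [lia|].
  intros n Hn. specialize (H n ltac:(lia)).
  assert (Hpos: 1 <= INR n) by (apply (le_INR 1); lia).
  assert (Hf : 1 <= INR (fact k)) by (apply (le_INR 1); pose proof (lt_O_fact k); lia).
  assert (Hnk : INR n <= INR n ^ k) by (rewrite <- (pow_1 (INR n)) at 1; apply Rle_pow; [lra|lia]).
  assert (Hnk2 : INR n <= INR n ^ (k+2)) by (rewrite <- (pow_1 (INR n)) at 1; apply Rle_pow; [lra|lia]).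
  set (a := INR n ^ k) in *. set (b := INR n ^ (k+2)) in *.
  pose proof (Rle_abs (t k n - / (INR (fact k) * a) * (1 - / INR n))).
  assert (h1 : / (INR (fact k) * a) <= / INR n).
  { apply Rinv_le_contravar; [lra|]. nra. }
  assert (h2 : 0 <= / INR n <= 1).
  { split. left; apply Rinv_0_lt_compat; lra. rewrite <- Rinv_1. apply Rinv_le_contravar; lra. }
  assert (h3 : / b <= / INR n) by (apply Rinv_le_contravar; lra).
  assert (h4 : 0 <= / b) by (left; apply Rinv_0_lt_compat; lra).
  assert (h5 : 0 <= / (INR (fact k) * a)) by (left; apply Rinv_0_lt_compat; nra).
  assert (h6 : / (INR (fact k) * a) * (1 - / INR n) <= / INR n) by nra.
  assert (h7 : C * / b <= Rabs C * / INR n).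
  { pose proof (Rle_abs C). pose proof (Rabs_pos C). nra. }
  unfold Rdiv. nra.
Qed.
Lemma key0 (x c K : R) : c + 2 <= x -> 0 <= c -> 0 <= K ->
  (1 - / x + c / x ^ 2) * (K * (1 - c / (x - 1)) / (x - 1)) <= K * (1 - c / x) / x.
Proof.
  intros Hx Hc HK.
  assert (Hd : K * (1 - c / x) / x - (1 - / x + c / x ^ 2) * (K * (1 - c / (x - 1)) / (x - 1))
     = K * (c * c) / (x ^ 2 * (x-1)^2)) by (field; split; lra).
  assert (0 <= K * (c * c) / (x ^ 2 * (x-1)^2)).
  { apply Rmult_le_pos; [nra|]. left; apply Rinv_0_lt_compat.
    apply Rmult_lt_0_compat; apply pow_lt; lra. }
  lra.
Qed.

Lemma key1 (x c E K : R) : 2 <= x -> 8 * c <= x -> 0 <= c -> 0 <= E -> 8 * E <= K ->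
  E / (x * sqrt (x - 1)) + K / sqrt (x - 1) * (1 - / x + c / x ^ 2) <= K / sqrt x.
Proof.
  intros Hx Hc Hc0 HE HK.
  pose proof (sqrt_lt_R0 x ltac:(lra)) as Hu.
  pose proof (sqrt_lt_R0 (x-1) ltac:(lra)) as Hv.
  pose proof (sqrt_sqrt x ltac:(lra)) as Hu2.
  pose proof (sqrt_sqrt (x-1) ltac:(lra)) as Hv2.
  set (u := sqrt x) in *. set (v := sqrt (x - 1)) in *.
  set (s := v / u).
  assert (Hs0 : 0 <= s) by (unfold s; left; apply Rdiv_lt_0_compat; lra).
  assert (Hs2 : s * s = 1 - / x).
  { unfold s. replace (v / u * (v / u)) with ((v*v)/(u*u)) by (field; lra). rewrite Hu2, Hv2. field; lra. }
  set (y := / x) in *.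
  assert (Hy : 0 < y <= /2) by (split; [apply Rinv_0_lt_compat; lra| apply Rinv_le_contravar; lra]).
  assert (Hs : 1 - 3 / 4 * y <= s) by nra.
  assert (Hxy : x * y = 1) by (unfold y; field; lra).
  assert (Hgoal : E * y + K * (1 - y + c * y * y) <= K * s).
  { assert (Hcy : c * y <= / 8).
    { replace (c * y) with (c / x) by (unfold y; field; lra).
      apply Rmult_le_reg_r with x; [lra|]. unfold Rdiv. rewrite Rmult_assoc, Rinv_l; lra. }
    assert (HK0 : 0 <= K) by lra.
    assert (h1 : K * (1 - 3/4*y) <= K * s) by (apply Rmult_le_compat_l; lra).
    assert (h2 : E * y <= K / 8 * y) by (apply Rmult_le_compat_r; lra).
    assert (h3 : K * y * (c * y) <= K * y * / 8) by (apply Rmult_le_compat_l; nra).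
    nra. }
  assert (Heq1 : E / (x * v) + K / v * (1 - y + c / x ^ 2) = (E * y + K * (1 - y + c * y * y)) / v)
    by (unfold y; field; lra).
  assert (Heq2 : K / u = K * s / v) by (unfold s; field; lra).
  rewrite Heq1, Heq2. unfold Rdiv. apply Rmult_le_compat_r; [left; apply Rinv_0_lt_compat; lra| exact Hgoal].
Qed.
Hypothesis t_nonneg : forall j n : nat, (1 <= n)%nat -> 0 <= t j n.

Lemma s0_bound : exists K N, 0 <= K /\ (1 <= N)%nat /\
  forall n, (N <= n)%nat -> sseq t n 0 <= K / INR n.
Proof.
  destruct t0_upper as [c [N0 [Hc [HN0 Ht0]]]].
  destruct (nat_above (2 * c + 2)) as [N2 HN2].
  set (N := Nat.max (Nat.max N0 N2) 2).
  assert (HNN2 : INR N2 <= INR N) by (apply le_INR; lia).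
  set (a := sseq t N 0).
  assert (Ha : 0 <= a) by (apply s_nonneg; auto; lia).
  assert (HNpos : 0 < INR N) by lra.
  set (K := 2 * INR N * a).
  assert (HK : 0 <= K) by (unfold K; nra).
  set (b := fun n => K * (1 - c / INR n) / INR n).
  assert (Hcl : forall m, (N <= m)%nat -> 0 <= 1 - c / INR m /\ 0 < INR m /\ 2 * c + 2 <= INR m).
  { intros m Hm. assert (INR N <= INR m) by (apply le_INR; lia).
    assert (0 < INR m) by lra. split; [|split; lra].
    assert (c / INR m <= 1); [|lra].
    apply Rmult_le_reg_r with (INR m); [lra|]. unfold Rdiv. rewrite Rmult_assoc, Rinv_l; lra. }
  assert (Hb : forall k, sseq t (N + k) 0 <= b (N + k)%nat).
  { induction k as [|k IH].
    - rewrite Nat.add_0_r. unfold b. fold a.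
      assert (c / INR N <= /2).
      { apply Rmult_le_reg_r with (INR N); [lra|]. unfold Rdiv. rewrite Rmult_assoc, Rinv_l; lra. }
      unfold K. replace (2 * INR N * a * (1 - c / INR N) / INR N) with (2 * a * (1 - c / INR N)) by (field; lra).
      nra.
    - replace (N + S k)%nat with (S (N + k)) by lia.
      rewrite s_decomp0 by lia. replace (S (N + k) - 1)%nat with (N + k)%nat by lia.
      destruct (Hcl (N + k)%nat ltac:(lia)) as [h1 [h2 h3]].
      assert (Hbk : 0 <= b (N + k)%nat) by (unfold b; apply Rmult_le_pos; [nra|left; apply Rinv_0_lt_compat; lra]).
      pose proof (Ht0 (S (N + k)) ltac:(lia)) as Htu.
      pose proof (t_nonneg 0 (S (N+k)) ltac:(lia)) as Htn.
      pose proof (s_nonneg t t_nonneg (N+k) 0 ltac:(lia)) as Hsn.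
      apply Rle_trans with (b (N + k)%nat * (1 - / INR (S (N + k)) + c / INR (S (N + k)) ^ 2)).
      + apply Rmult_le_compat; auto.
      + rewrite Rmult_comm. unfold b. rewrite S_INR.
        pose proof (key0 (INR (N + k) + 1) c K ltac:(lra) Hc HK) as Hk0.
        replace (INR (N + k) + 1 - 1) with (INR (N + k)) in Hk0 by ring. exact Hk0. }
  exists K, N. split; [exact HK|]. split; [lia|].
  intros n Hn. replace n with (N + (n - N))%nat by lia.
  eapply Rle_trans; [apply Hb|]. unfold b.
  destruct (Hcl (N + (n - N))%nat ltac:(lia)) as [h1 [h2 h3]].
  assert (c / INR (N + (n - N)) >= 0) by (unfold Rdiv; apply Rle_ge, Rmult_le_pos; [lra|left; apply Rinv_0_lt_compat; lra]).
  unfold Rdiv. apply Rmult_le_compat_r; [left; apply Rinv_0_lt_compat; lra|]. nra.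
Qed.

Definition Q j := exists C N, 0 <= C /\ (1 <= N)%nat /\
  forall n, (N <= n)%nat -> sseq t n j <= C / sqrt (INR n).

Lemma Q0 : Q 0.
Proof.
  destruct s0_bound as [K [N [HK [HN H]]]]. exists K, N. split; [auto|]. split; [auto|].
  intros n Hn. eapply Rle_trans; [apply H; auto|].
  assert (h : 1 <= INR n) by (apply (le_INR 1); lia).
  pose proof (sqrt_lt_R0 (INR n) ltac:(lra)). pose proof (sqrt_sqrt (INR n) ltac:(lra)).
  assert (sqrt (INR n) <= INR n) by nra.
  unfold Rdiv. apply Rmult_le_compat_l; auto. apply Rinv_le_contravar; lra.
Qed.

Lemma term_bound i j : (i < j)%nat -> Q i -> exists E N, 0 <= E /\ (2 <= N)%nat /\
  forall n, (N <= n)%nat -> sseq t (n-1) i * t (j-i)%nat n <= E / (INR n * sqrt (INR (n-1))).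
Proof.
  intros Hij [C [N1 [HC [HN1 H1]]]].
  destruct (tk_upper (j - i) ltac:(lia)) as [D [N2 [HD [HN2 H2]]]].
  exists (C * D), (Nat.max (Nat.max (S N1) N2) 2). split; [nra|]. split; [lia|].
  intros n Hn.
  assert (h1 : 1 <= INR (n-1)) by (apply (le_INR 1); lia).
  assert (h2 : 1 <= INR n) by (apply (le_INR 1); lia).
  pose proof (sqrt_lt_R0 (INR (n-1)) ltac:(lra)).
  apply Rle_trans with ((C / sqrt (INR (n-1))) * (D / INR n)).
  - apply Rmult_le_compat.
    + apply s_nonneg; auto; lia.
    + apply t_nonneg; lia.
    + apply H1; lia.
    + apply H2; lia.
  - right. field. lra.
Qed.

Lemma forcing j : (forall i, (i < j)%nat -> Q i) -> forall m, (m < j)%nat ->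
  exists E N, 0 <= E /\ (2 <= N)%nat /\ forall n, (N <= n)%nat ->
  sum_f_R0 (fun i => sseq t (n-1) i * t (j-i)%nat n) m <= E / (INR n * sqrt (INR (n-1))).
Proof.
  intros IH m. induction m as [|m IHm]; intros Hm.
  - destruct (term_bound 0 j Hm (IH 0%nat Hm)) as [E [N [HE [HN H]]]].
    exists E, N. split; [auto|split; [auto|]]. intros n Hn. simpl. apply H; auto.
  - destruct (IHm ltac:(lia)) as [E1 [N1 [HE1 [HN1 H1]]]].
    destruct (term_bound (S m) j Hm (IH _ Hm)) as [E2 [N2 [HE2 [HN2 H2]]]].
    exists (E1 + E2), (Nat.max N1 N2). split; [lra|]. split; [lia|].
    intros n Hn. rewrite tech5.
    specialize (H1 n ltac:(lia)). specialize (H2 n ltac:(lia)).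
    replace ((E1 + E2) / (INR n * sqrt (INR (n - 1)))) with
      (E1 / (INR n * sqrt (INR (n - 1))) + E2 / (INR n * sqrt (INR (n - 1)))).
    + lra.
    + unfold Rdiv. ring.
Qed.

Lemma Qstep j : (1 <= j)%nat -> (forall i, (i < j)%nat -> Q i) -> Q j.
Proof.
  intros Hj IH.
  destruct t0_upper as [c [N0 [Hc [HN0 Ht0]]]].
  destruct (forcing j IH (j-1) ltac:(lia)) as [E [N1 [HE [HN1 HF]]]].
  destruct (nat_above (8 * c)) as [N2 HN2].
  set (N := Nat.max (Nat.max N0 N1) N2).
  assert (HNN2 : INR N2 <= INR N) by (apply le_INR; lia).
  assert (HN2' : 2 <= INR N) by (apply (le_INR 2); lia).
  set (a := sseq t N j).
  assert (Ha : 0 <= a) by (apply s_nonneg; auto; lia).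
  pose proof (sqrt_lt_R0 (INR N) ltac:(lra)) as HsN.
  set (K := 8 * E + a * sqrt (INR N)).
  assert (HK : 0 <= K) by (unfold K; nra).
  assert (Hb : forall k, sseq t (N + k) j <= K / sqrt (INR (N + k))).
  { induction k as [|k IHk].
    - rewrite Nat.add_0_r. fold a.
      replace a with (a * sqrt (INR N) / sqrt (INR N)) by (field; lra).
      unfold Rdiv. apply Rmult_le_compat_r; [left; apply Rinv_0_lt_compat; lra|]. unfold K. nra.
    - replace (N + S k)%nat with (S (N + k)) by lia.
      rewrite s_decomp by lia. replace (S (N + k) - 1)%nat with (N + k)%nat by lia.
      assert (hNk : INR N <= INR (N + k)) by (apply le_INR; lia).
      pose proof (HF (S (N + k)) ltac:(lia)) as HFk.
      replace (S (N + k) - 1)%nat with (N + k)%nat in HFk by lia.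
      pose proof (Ht0 (S (N + k)) ltac:(lia)) as Htu.
      pose proof (t_nonneg 0 (S (N+k)) ltac:(lia)) as Htn.
      pose proof (s_nonneg t t_nonneg (N+k) j ltac:(lia)) as Hsn.
      pose proof (key1 (INR (N + k) + 1) c E K ltac:(lra) ltac:(lra) Hc HE ltac:(unfold K; nra)) as Hk1.
      replace (INR (N + k) + 1 - 1) with (INR (N + k)) in Hk1 by ring.
      rewrite S_INR in *.
      pose proof (sqrt_lt_R0 (INR (N + k)) ltac:(lra)).
      assert (sseq t (N + k) j * t 0%nat (S (N + k)) <=
        K / sqrt (INR (N + k)) * (1 - / (INR (N + k) + 1) + c / (INR (N + k) + 1) ^ 2)).
      { apply Rmult_le_compat; auto. }
      lra. }
  exists K, N. split; [exact HK|]. split; [lia|].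
  intros n Hn. replace n with (N + (n - N))%nat by lia. apply Hb.
Qed.

Lemma Qall : forall j, Q j.
Proof.
  assert (forall j i, (i <= j)%nat -> Q i).
  { induction j as [|j IHj]; intros i Hi.
    - replace i with 0%nat by lia. apply Q0.
    - destruct (Nat.eq_dec i (S j)) as [->|Hne].
      + apply Qstep; [lia|]. intros i' Hi'. apply IHj. lia.
      + apply IHj. lia. }
  intros j. apply (H j j). lia.
Qed.
End S.

Theorem mainTheorem10 (t : nat -> nat -> R)
  (t_nonneg : forall j n : nat, (1 <= n)%nat -> 0 <= t j n)
  (t_asym : forall j : nat,
     bigO (fun n => t j n - / (INR (fact j) * INR n ^ j) * (1 - / INR n))
          (fun n => / INR n ^ (j + 2)))
  : forall j : nat, bigO (fun n => sseq t n j) (fun n => Rpower (INR n) (- (/ INR (j + 1)))).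
Proof.
  intros j. destruct j as [|j'].
  - destruct (s0_bound t t_asym t_nonneg) as [K [N [HK [HN H]]]].
    exists K, N. intros n Hn.
    assert (h : 1 <= INR n) by (apply (le_INR 1); lia).
    rewrite Rabs_right by (apply Rle_ge, s_nonneg; auto; lia).
    replace (INR (0 + 1)) with 1 by (simpl; ring). rewrite Rinv_1, Rpower_Ropp, Rpower_1 by lra.
    apply H; auto.
  - destruct (Qall t t_asym t_nonneg (S j')) as [C [N [HC [HN H]]]].
    exists C, N. intros n Hn.
    assert (h : 1 <= INR n) by (apply (le_INR 1); lia).
    rewrite Rabs_right by (apply Rle_ge, s_nonneg; auto; lia).
    eapply Rle_trans; [apply H; auto|].
    unfold Rdiv. apply Rmult_le_compat_l; auto.
    rewrite <- Rpower_sqrt by lra. rewrite <- Rpower_Ropp.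
    apply Rle_Rpower; auto.
    assert (h2 : 2 <= INR (S j' + 1)) by (apply (le_INR 2); lia).
    assert (/ INR (S j' + 1) <= / 2) by (apply Rinv_le_contravar; lra). lra.
Qed.
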